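(* Let $\alpha>0$. Suppose sequences $\{\bm{P}^k\}_{k\ge0}\subseteq\mathcal{B}(n,K)$ and $\{\bm{Y}^k\}_{k\ge0}\subseteq\mathbb{R}^{n\times K}$ satisfy $\bm{P}^{k+1}\in\operatorname{sign}(\bm{P}^k+\bm{Y}^k/\alpha)$ for all $k\ge0$, $\bm{P}^k\to\bm{P}^*$ and $\bm{Y}^k\to\bm{Y}^*$. Then $\bm{P}^*\in\operatorname{sign}(\bm{P}^*+\bm{Y}^*/\alpha)$. Moreover, for any $\bm{Y}\in\mathbb{R}^{n\times K}$ with $\bm{P}^*\in\operatorname{sign}(\bm{Y})$, we have $\bm{P}^*\in\operatorname{sign}(\bm{P}^*+\bm{Y}/\alpha)$.
   Context: $\mathcal{B}(n,K)$ is the set of $n\times K$ matrices with entries in $\{\pm1\}$. For $a\in\mathbb{R}$, $\operatorname{sign}(a)=\{a/|a|\}$ if $a\ne0$ and $\operatorname{sign}(0)=\{-1,1\}$; for a matrix $\bm{B}$, $\operatorname{sign}(\bm{B})$ is the set of matrices $\bm{\xi}$ with $\xi_{ij}\in\operatorname{sign}(B_{ij})$ for all $i,j$. *)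

(* Defs.v *)
From HB Require Import structures.
From mathcomp Require Import all_boot all_order all_algebra.
From mathcomp Require Import all_classical all_reals all_analysis.
Import Order.TTheory GRing.Theory Num.Theory.
Local Open Scope ring_scope.

Definition sign_set {R : realType} (a : R) : set R :=
  fun s => if a != 0 then s = a / `|a| else (s = -1 \/ s = 1).

Definition in_sign_mx {R : realType} {n K : nat} (xi B : 'M[R]_(n, K)) : Prop :=
  forall i j, sign_set (B i j) (xi i j).

Definition is_pm1_mx {R : realType} {n K : nat} (P : 'M[R]_(n, K)) : Prop :=
  forall i j, P i j = 1 \/ P i j = -1.

(* Main.v *)
Require Import Defs.
From HB Require Import structures.
From mathcomp Require Import all_boot all_order all_algebra.
From mathcomp Require Import all_classical all_reals all_analysis.
Import Order.TTheory GRing.Theory Num.Theory.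
Import numFieldNormedType.Exports.
Local Open Scope ring_scope.
Local Open Scope classical_set_scope.

Lemma sign_setP (R : realType) (a s : R) : s * s = 1 ->
  (sign_set a s <-> 0 <= s * a).
Proof.
move=> ss.
have : (s ^+ 2 == 1) by rewrite expr2 ss.
rewrite sqrf_eq1 => /orP[] /eqP ->; rewrite /sign_set.
- rewrite mul1r; split.
  + case: ifP => [a0 h|]; last by move/negbFE/eqP ->.
    have : 0 < a / `|a| by rewrite -h ltr01.
    by rewrite pmulr_lgt0 ?invr_gt0 ?normr_gt0 // => /ltW.
  + move=> a0; case: ifP => [a0'|]; last by right.
    by rewrite ger0_norm // divff.
- rewrite mulN1r oppr_ge0; split.
  + case: ifP => [a0 h|]; last by move/negbFE/eqP ->.
    have : a / `|a| < 0 by rewrite -h ltrN10.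
    by rewrite pmulr_llt0 ?invr_gt0 ?normr_gt0 // => /ltW.
  + move=> a0; case: ifP => [a0'|]; last by left.
    by rewrite ler0_norm // invrN mulrN divff.
Qed.

Lemma lim_ge (R : realType) (u : nat -> R) (l b : R) :
  u @ \oo --> l -> (\forall k \near \oo, b <= u k) -> b <= l.
Proof. by move=> c h; have := @closed_cvg _ _ _ _ u _ (@closed_ge _ b); move=> H; have := H _ _ h l c; move=> /= H1; apply: H1. Qed.

Lemma lim_le (R : realType) (u : nat -> R) (l b : R) :
  u @ \oo --> l -> (\forall k \near \oo, u k <= b) -> l <= b.
Proof. by move=> c h; have := @closed_cvg _ _ _ _ u _ (@closed_le _ b); move=> H; have := H _ _ h l c; move=> /= H1; apply: H1. Qed.

Theorem lemma3 (R : realType) (n K : nat) (alpha : R) (Hal : 0 < alpha)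
  (P Y : nat -> 'M[R]_(n, K)) (Pstar Ystar : 'M[R]_(n, K))
  (HPB : forall k, is_pm1_mx (P k))
  (Hiter : forall k, in_sign_mx (P k.+1) (P k + alpha^-1 *: Y k))
  (HPc : P @ \oo --> Pstar) (HYc : Y @ \oo --> Ystar) :
  in_sign_mx Pstar (Pstar + alpha^-1 *: Ystar) /\
  (forall Y0 : 'M[R]_(n, K), in_sign_mx Pstar Y0 ->
     in_sign_mx Pstar (Pstar + alpha^-1 *: Y0)).
Proof.
have pm1 : forall x : R, x = 1 \/ x = -1 -> x * x = 1.
  by move=> x [] ->; rewrite ?mulrNN mulr1.
have Pc : forall i j, (fun k => P k i j) @ \oo --> Pstar i j.
  move=> i j; exact: (cvg_comp _ _ HPc (@coord_continuous R n K i j _)).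
have Yc : forall i j, (fun k => Y k i j) @ \oo --> Ystar i j.
  move=> i j; exact: (cvg_comp _ _ HYc (@coord_continuous R n K i j _)).
have Pss : forall i j, Pstar i j * Pstar i j = 1.
  move=> i j.
  have c : (fun k => P k i j * P k i j) @ \oo --> Pstar i j * Pstar i j.
    exact: cvgM.
  have hn : \forall k \near \oo, P k i j * P k i j = 1.
    by near=> k; rewrite pm1 //; apply: HPB.
  apply/le_anti/andP; split.
  - apply: (@lim_le R _ _ 1 c); apply: filterS hn => k ->; exact: lexx.
  - apply: (@lim_ge R _ _ 1 c); apply: filterS hn => k ->; exact: lexx.
split.
- move=> i j; apply/sign_setP => //.
  have c : (fun k => P k.+1 i j * (P k i j + alpha^-1 * Y k i j)) @ \oo -->
             Pstar i j * (Pstar i j + alpha^-1 * Ystar i j).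
    apply: cvgM.
      by rewrite (cvg_shiftS (fun k => P k i j)); exact: Pc.
    apply: cvgD; first exact: Pc.
    exact: cvgMl_tmp.
  rewrite !mxE; apply: (@lim_ge R _ _ 0 c).
  near=> k => /=.
  have := Hiter k i j; rewrite !mxE.
  move/(sign_setP _ _ _ (pm1 _ (HPB k.+1 i j))). exact.
- move=> Y0 HY i j; apply/(sign_setP _ _ _ (Pss i j)); rewrite !mxE.
  have := HY i j; move/(sign_setP _ _ _ (Pss i j)) => h.
  rewrite mulrDr Pss; apply: addr_ge0 => //.
  by rewrite mulrCA mulr_ge0 // invr_ge0 ltW.
Unshelve. all: end_near.
Qed.
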